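(* Let $p$ be an odd prime, let $a,c$ be positive integers such that $c$ is a primitive divisor of $p^a-1$, and let $b=2^t$ with $t\ge 2$. Then $bc$ is a primitive divisor of $p^{ab}-1$ if and only if $p^a\equiv 1\pmod 4$ and $\tfrac{p^a-1}{c}$ is odd.
   Context: An integer $e$ is a primitive divisor of $p^m-1$ if $e\mid p^m-1$ and $e\nmid p^s-1$ for every $1\le s<m$. *)

(* Defs.v *)
From mathcomp Require Import all_boot.

Definition primitive_divisor (e p m : nat) : Prop :=
  (e %| p ^ m - 1) /\ (forall s : nat, 1 <= s -> s < m -> ~~ (e %| p ^ s - 1)).

(* Main.v *)
Require Import Defs.
From mathcomp Require Import all_boot.
From mathcomp Require Import zify.

Lemma pow1_mul x y k : y = 1 %[mod x] -> y ^ k = 1 %[mod x].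
Proof. by move=> H; rewrite -modnXm H modnXm exp1n. Qed.

Lemma pow1_gcd x y m n : y ^ m = 1 %[mod x] -> y ^ n = 1 %[mod x] ->
  y ^ (gcdn m n) = 1 %[mod x].
Proof.
move=> Hm Hn; case: (posnP m) => [->|m0]; first by rewrite gcd0n.
case: (Bezoutl n m0) => u _ /dvdnP [k Hk].
have E1 : y ^ (gcdn m n + u * n) = 1 %[mod x].
  by rewrite Hk mulnC expnM pow1_mul.
have E2 : y ^ (gcdn m n + u * n) = y ^ gcdn m n %[mod x].
  by rewrite expnD -modnMmr [u * n]mulnC expnM pow1_mul // modnMmr muln1.
by rewrite -E2 E1.
Qed.

Lemma dvd_pow x y s : 0 < y -> (x %| y ^ s - 1) = (y ^ s == 1 %[mod x]).
Proof. by move=> y0; rewrite eqn_mod_dvd // expn_gt0 y0. Qed.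

Lemma key q k : odd q -> exists r, odd r /\ q ^ (2 ^ k.+1) - 1 = (q ^ 2 - 1) * 2 ^ k * r.
Proof.
move=> oq; elim: k => [|k [r [or Hr]]]; first by exists 1; split; rewrite // expn0 !muln1.
have oy : odd (q ^ (2 ^ k)) by rewrite oddX oq orbT.
move: oy; set y := q ^ (2 ^ k) => oy.
have -> : q ^ (2 ^ k.+2) = (q ^ (2 ^ k.+1)) ^ 2 by rewrite -expnM -expnSr.
have Ey : q ^ (2 ^ k.+1) = y ^ 2 by rewrite /y -expnM -expnSr.
have [z Hz] : exists z, y = z.*2.+1.
  by exists y./2; rewrite -{1}(odd_double_half y) oy.
exists (r * (2 * z * z + 2 * z + 1)); split.
  by rewrite oddM or /= !oddD !oddM /= addbF addbb.
have H2 : (y ^ 2) ^ 2 - 1 = (y ^ 2 - 1) * (y ^ 2 + 1).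
  have : 1 <= y ^ 2 by rewrite expn_gt0 Hz.
  move: (y ^ 2) => w w1. by rewrite -mulnn mulnBl mul1n mulnDr muln1 subnDA addnK.
rewrite Ey H2 -Ey Hr Ey Hz.
have -> : z.*2.+1 ^ 2 + 1 = 2 * (2 * z * z + 2 * z + 1).
  rewrite -mul2n -mulnn; lia.
rewrite (expnS 2 k); move: (q ^ 2 - 1) (2 ^ k) (2 * z * z + 2 * z + 1) => A B C.
lia.
Qed.

Lemma mod4_lemma q e : q + 1 = e.*2 -> (q = 1 %[mod 4]) <-> odd e.
Proof.
move=> He.
have He' : q + 1 = 2 * e by rewrite He -mul2n.
have := odd_double_half e; rewrite -mul2n => Ee.
move: (e./2) Ee He' => h; case: (odd e) => /= Ee He'; split => // H; clear He; lia.
Qed.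

Theorem mainTheorem13 (p a c t : nat) :
  prime p -> odd p -> 0 < a -> 0 < c -> 2 <= t ->
  primitive_divisor c p a ->
  (primitive_divisor (2 ^ t * c) p (a * 2 ^ t) <->
   (p ^ a = 1 %[mod 4] /\ odd ((p ^ a - 1) %/ c))).
Proof.
move=> pp op a0 c0 t2 [cdiv cprim].
have p0 : 0 < p by exact: prime_gt0.
case: t t2 => [|[|t']] // _.
set q := p ^ a.
have oq : odd q by rewrite /q oddX op orbT.
have q0 : 0 < q by rewrite /q expn_gt0 p0.
set D := (q - 1) %/ c.
have HD : q - 1 = D * c by rewrite /D divnK.
have [e He] : exists e, q + 1 = e.*2.
  exists (q + 1)./2; rewrite -{1}(odd_double_half (q + 1)) oddD oq //.
have Hq2 : q ^ 2 - 1 = c * D * e * 2.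
  have : q ^ 2 - 1 = (q - 1) * (q + 1).
    by rewrite -mulnn mulnBl mul1n mulnDr muln1 subnDA addnK.
  move=> ->; rewrite HD He -mul2n; lia.
have [r1 [or1 Hr1]] := key _ t'.+1 oq.
have [r2 [or2 Hr2]] := key _ t' oq.
have X : 2 ^ t'.+2 * c %| q ^ (2 ^ t'.+2) - 1.
  by rewrite Hr1 Hq2 (expnS 2 t'.+1); apply/dvdnP; exists (D * e * r1); lia.
have Y : (2 ^ t'.+2 * c %| q ^ (2 ^ t'.+1) - 1) = ~~ (odd D && odd e).
  rewrite Hr2 Hq2.
  have -> : c * D * e * 2 * 2 ^ t' * r2 = (2 ^ t'.+1 * c) * (D * e * r2) by rewrite expnS; lia.
  have -> : 2 ^ t'.+2 * c = (2 ^ t'.+1 * c) * 2 by rewrite expnS; lia.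
  rewrite dvdn_pmul2l ?muln_gt0 ?expn_gt0 ?c0 //.
  by rewrite dvdn2 !oddM or2 andbT.
have Hmod4 : (q = 1 %[mod 4]) <-> odd e.
  exact: mod4_lemma.
have Epow : forall m, p ^ (a * m) = q ^ m by move=> m; rewrite expnM.
split.
- move=> [_ prim].
  have := prim (a * 2 ^ t'.+1).
  rewrite Epow Y => /(_ _ _) H.
  have /H : 1 <= a * 2 ^ t'.+1 by rewrite muln_gt0 a0 expn_gt0.
  have /[swap]/[apply] : a * 2 ^ t'.+1 < a * 2 ^ t'.+2 by rewrite ltn_pmul2l // ltn_exp2l.
  rewrite negbK => /andP [oD oe]; split => //; exact/Hmod4.
- move=> [/Hmod4 oe oD]; split; first by rewrite Epow.
  move=> s s1 slt; apply/negP => Hs.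
  have Hc : c %| p ^ s - 1 by apply: dvdn_trans Hs; apply: dvdn_mull.
  rewrite dvd_pow // in Hc; rewrite dvd_pow // in cdiv.
  have Hg := pow1_gcd _ _ _ _ (eqP Hc) (eqP cdiv).
  have ga : gcdn s a = a.
    have gpos : 0 < gcdn s a by rewrite gcdn_gt0 a0 orbT.
    have gle : gcdn s a <= a by apply: dvdn_leq => //; apply: dvdn_gcdr.
    case: (ltngtP (gcdn s a) a) gle => // glt _.
    have := cprim _ gpos glt; rewrite dvd_pow // Hg eqxx //.
  have : a %| s by rewrite -ga dvdn_gcdl.
  move=> /dvdnP [m Hm]; subst s.
  rewrite [m * a]mulnC Epow in Hs.
  have m0 : 0 < m by move: s1; rewrite muln_gt0 => /andP[].
  have mlt : m < 2 ^ t'.+2 by rewrite mulnC ltn_pmul2l in slt.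
  rewrite dvd_pow // in Hs; rewrite dvd_pow // in X.
  have Hg2 := pow1_gcd _ _ _ _ (eqP Hs) (eqP X).
  have : gcdn m (2 ^ t'.+2) %| 2 ^ t'.+2 by apply: dvdn_gcdr.
  case/(dvdn_pfactor _ _ (isT : prime 2)) => j jle gE.
  have gle : gcdn m (2 ^ t'.+2) <= m by apply: dvdn_leq => //; apply: dvdn_gcdl.
  have jlt : j <= t'.+1.
    rewrite -ltnS -(ltn_exp2l _ _ (isT : 1 < 2)) -gE; exact: leq_ltn_trans gle mlt.
  have : 2 ^ j %| 2 ^ t'.+1 by rewrite dvdn_exp2l.
  move=> /dvdnP [k Hk].
  have : q ^ (2 ^ t'.+1) = 1 %[mod 2 ^ t'.+2 * c].
    by rewrite Hk mulnC expnM -gE pow1_mul.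
  move=> /eqP; rewrite -dvd_pow // Y oD oe //.
Qed.
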